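(* There exists an absolute constant $C\ge1$ such that for every $n\ge1$ and every two complementary intervals $I,J$ of $F_n$ in $[0,1]$ that are separated by at most two adjacent complementary intervals of $F_n$, one has \[\frac{1}{Cn}\le\frac{|I|}{|J|}\le Cn,\] where $|\cdot|$ denotes Euclidean length.
   Context: Define finite subsets $F_n\subset[0,1]$ of rationals: $F_0=\{0/1,1/1\}$, and $F_n$ is obtained from $F_{n-1}$ by inserting, between each pair of consecutive elements $p/q<r/s$ (in lowest terms), the mediant $(p+r)/(q+s)$. The complementary intervals of $F_n$ are the open intervals between consecutive elements of $F_n$. ''Separated by at most two adjacent complementary intervals'' means that between $I$ and $J$ there are zero, one, or two complementary intervals of $F_n$. *)

(* Defs.v *)
From mathcomp Require Import all_boot all_order all_algebra.
Set Implicit Arguments. Unset Strict Implicit. Unset Printing Implicit Defensive.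
Import Order.TTheory GRing.Theory Num.Theory.
Local Open Scope ring_scope.

Definition mediant (a b : rat) : rat :=
  ((numq a + numq b)%:~R / (denq a + denq b)%:~R)%R.

Fixpoint insert_mediants (s : seq rat) : seq rat :=
  match s with
  | x :: ((y :: _) as t) => x :: mediant x y :: insert_mediants t
  | _ => s
  end.

Definition F (n : nat) : seq rat := iter n insert_mediants [:: 0; 1].

(* Length of the i-th complementary interval of F_n, i.e. of
   (F_n[i], F_n[i+1]), for i < size (F n) - 1. *)
Definition clen (n i : nat) : rat := nth 0 (F n) i.+1 - nth 0 (F n) i.

(* Main.v *)
Require Import Defs.
From mathcomp Require Import all_boot all_order all_algebra.
From mathcomp Require Import zify ring lra.
Import Order.TTheory GRing.Theory Num.Theory.
Local Open Scope ring_scope.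

Definition detr (x y : rat) : bool := numq y * denq x - numq x * denq y == 1.

Lemma med_nd x y : detr x y ->
  numq (mediant x y) = numq x + numq y /\ denq (mediant x y) = denq x + denq y.
Proof.
move=> /eqP H.
have hx := denq_gt0 x; have hy := denq_gt0 y.
have cop : coprime (absz (numq x + numq y)) (absz (denq x + denq y)).
  have : coprimez (numq x + numq y) (denq x + denq y).
    apply/coprimezP; exists (denq x, - numq x) => /=.
    by rewrite -H; ring.
  by [].
rewrite /mediant (coprimeq_num cop) (coprimeq_den cop).
have hp : 0 < denq x + denq y by lia.
rewrite gtr0_sg // mul1r gtr0_norm //.
by case: eqP => [E|]; [lia|].
Qed.
Fixpoint insS (s : seq int) : seq int :=
  match s with
  | x :: ((y :: _) as t) => x :: (x + y) :: insS t
  | _ => s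
  end.

Lemma ins_head y t : exists u, insert_mediants (y :: t) = y :: u.
Proof. by case: t => [|z t] /=; eexists. Qed.

Lemma ins_cons x y t : insert_mediants (x :: y :: t) = x :: mediant x y :: insert_mediants (y :: t).
Proof. by []. Qed.
Lemma insS_cons x y t : insS (x :: y :: t) = x :: (x + y) :: insS (y :: t).
Proof. by []. Qed.

Lemma ins_sorted s : sorted detr s ->
  sorted detr (insert_mediants s) /\ map denq (insert_mediants s) = insS (map denq s).
Proof.
elim: s => [|x [|y t] IH] // H.
have /andP[Hxy Ht] : detr x y && path detr y t by exact: H.
have [IH1 IH2] := IH Ht.
have [En Ed] := med_nd _ _ Hxy.
have [u Eu] := ins_head y t.
rewrite ins_cons map_cons map_cons insS_cons -map_cons -IH2.
move: IH1; rewrite Eu => IH1; split.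
  move: Hxy; rewrite /detr /= Ed En => /eqP H1.
  move: IH1; rewrite /= /detr => ->; rewrite andbT; apply/andP; split; apply/eqP; lia.
by rewrite /= Ed.
Qed.

Lemma F_sorted n : sorted detr (F n).
Proof. elim: n => [|n IH]; first by []. rewrite /F iterS -/(F n). by case: (ins_sorted _ IH). Qed.

Definition D n := map denq (F n).

Lemma D_S n : D n.+1 = insS (D n).
Proof. by rewrite /D /F iterS -/(F n) (proj2 (ins_sorted _ (F_sorted n))). Qed.

Lemma insS_size s : size (insS s) = (size s + (size s).-1)%N.
Proof.
elim: s => [|x [|y t] IH] //.
rewrite insS_cons /= in IH *. rewrite IH /=. lia.
Qed.

Lemma insS_even s k t : k = (2 * t)%N -> (t < size s)%N -> nth 0 (insS s) k = nth 0 s t.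
Proof.
elim: s k t => [|x [|y u] IH] k t -> Ht //.
  by case: t Ht.
case: t Ht => [|t] Ht; first by [].
rewrite insS_cons.
have -> : (2 * t.+1 = (2 * t).+2)%N by lia.
by rewrite /= (IH (2 * t)%N t).
Qed.

Lemma insS_odd s k t : k = (2 * t).+1 -> (t.+1 < size s)%N ->
  nth 0 (insS s) k = nth 0 s t + nth 0 s t.+1.
Proof.
elim: s k t => [|x [|y u] IH] k t -> Ht //.
case: t Ht => [|t] Ht; first by [].
rewrite insS_cons.
have -> : ((2 * t.+1).+1 = (2 * t).+3)%N by lia.
by rewrite /= (IH (2 * t).+1 t).
Qed.
Lemma parity u : exists t, u = (2 * t)%N \/ u = (2 * t).+1.
Proof.
exists (u %/ 2)%N.
have := divn_eq u 2; have : (u %% 2 < 2)%N by rewrite ltn_mod.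
case: (u %% 2)%N => [|[|k]] H E; [left|right|]; lia.
Qed.

Lemma D_size n : (2 <= size (D n))%N.
Proof.
elim: n => [|n IH] //. rewrite D_S insS_size; lia.
Qed.

Lemma D_pos n t : (t < size (D n))%N -> 0 < nth 0 (D n) t.
Proof.
move=> H; rewrite /D (nth_map 0) ?denq_gt0 //.
by move: H; rewrite /D size_map.
Qed.

Definition Adj (m : nat) := forall t, (t.+1 < size (D m))%N ->
  nth 0 (D m) t.+1 <= (m%:Z + 1) * nth 0 (D m) t /\
  nth 0 (D m) t <= (m%:Z + 1) * nth 0 (D m) t.+1.

Lemma Adj_all m : Adj m.
Proof.
elim: m => [|m IH] t.
  by case: t => [|t] //= _.
rewrite D_S insS_size => Ht.
have [s [E|E]] := parity t.
- have Hs : (s.+1 < size (D m))%N by lia.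
  rewrite (insS_odd _ t.+1 s); [|lia|lia]. rewrite (insS_even _ t s); [|lia|lia].
  have := IH s Hs; have := D_pos _ _ Hs; have := D_pos _ _ (ltnW Hs).
  move=> ha hb [h1 h2].
  split; nia.
- have Hs : (s.+1 < size (D m))%N by lia.
  rewrite (insS_odd _ t s); [|lia|lia]. rewrite (insS_even _ t.+1 s.+1); [|lia|lia].
  have := IH s Hs; have := D_pos _ _ Hs; have := D_pos _ _ (ltnW Hs).
  move=> ha hb [h1 h2].
  split; nia.
Qed.

Definition Wp (m : nat) := forall t, (t.+2 < size (D m))%N ->
  nth 0 (D m) t <= nth 0 (D m) t.+1 + 2 * nth 0 (D m) t.+2 /\
  nth 0 (D m) t.+2 <= nth 0 (D m) t.+1 + 2 * nth 0 (D m) t.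

Lemma Wp_all m : Wp m.
Proof.
elim: m => [|m IH] t.
  by case: t => [|t].
rewrite D_S insS_size => Ht.
have [s [E|E]] := parity t.
- have Hs : (s.+1 < size (D m))%N by lia.
  rewrite (insS_even _ t.+2 s.+1); [|lia|lia]. rewrite (insS_odd _ t.+1 s); [|lia|lia]. rewrite (insS_even _ t s); [|lia|lia].
  have := D_pos _ _ Hs; have := D_pos _ _ (ltnW Hs).
  move=> ha hb.
  split; lia.
- have Hs : (s.+2 < size (D m))%N by lia.
  rewrite (insS_odd _ t.+2 s.+1); [|lia|lia]. rewrite (insS_even _ t.+1 s.+1); [|lia|lia]. rewrite (insS_odd _ t s); [|lia|lia].
  have := IH s Hs; have := D_pos _ _ Hs; have := D_pos _ _ (ltnW Hs); have := D_pos _ _ (ltnW (ltnW Hs)).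
  move=> ha hb hc [h1 h2].
  split; lia.
Qed.

Definition Mt m t := nth 0 (D m) t + nth 0 (D m) t.+1.
Definition Pp n u := nth 0 (D n) u * nth 0 (D n) u.+1.

Lemma Mt_pos m t : (t.+1 < size (D m))%N -> 0 < Mt m t.
Proof. move=> H; have := D_pos _ _ H; have := D_pos _ _ (ltnW H); rewrite /Mt; lia. Qed.

Lemma Pb m u : (u.+1 < size (D m.+1))%N -> exists t, (t.+1 < size (D m))%N /\
  (2 * t <= u <= 2 * t + 1)%N /\ Pp m.+1 u <= Mt m t ^+ 2 /\
  Mt m t ^+ 2 <= (m%:Z + 2) * Pp m.+1 u.
Proof.
rewrite /Pp D_S insS_size => Ht.
have [s [E|E]] := parity u; exists s.
- have Hs : (s.+1 < size (D m))%N by lia.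
  rewrite (insS_odd _ u.+1 s); [|lia|lia]. rewrite (insS_even _ u s); [|lia|lia].
  have := Adj_all _ _ Hs; have := D_pos _ _ Hs; have := D_pos _ _ (ltnW Hs).
  rewrite /Mt. move=> ha hb [h1 h2].
  do 2! split => //; first lia; nia.
- have Hs : (s.+1 < size (D m))%N by lia.
  rewrite (insS_odd _ u s); [|lia|lia]. rewrite (insS_even _ u.+1 s.+1); [|lia|lia].
  have := Adj_all _ _ Hs; have := D_pos _ _ Hs; have := D_pos _ _ (ltnW Hs).
  rewrite /Mt. move=> ha hb [h1 h2].
  do 2! split => //; first lia; nia.
Qed.

Lemma Mb m s : (s.+2 < size (D m))%N -> Mt m s.+1 <= 2 * Mt m s /\ Mt m s <= 2 * Mt m s.+1.
Proof.
move=> Hs; have := Wp_all _ _ Hs; have := D_pos _ _ Hs; have := D_pos _ _ (ltnW Hs);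
  have := D_pos _ _ (ltnW (ltnW Hs)).
rewrite /Mt; lia.
Qed.

Lemma M4 m t t' : (t.+1 < size (D m))%N -> (t'.+1 < size (D m))%N ->
  (t' <= t + 2)%N -> (t <= t' + 2)%N -> Mt m t' <= 4 * Mt m t.
Proof.
move=> H1 H2 H3 H4.

case: (leqP t t') => h.
- have [k Ek] : exists k, t' = (t + k)%N by exists (t' - t)%N; lia.
  subst t'. case: k H1 H2 H3 H4 h => [|[|[|k]]] H1 H2 H3 H4 h; have P2 := Mt_pos _ _ H2; have P1 := Mt_pos _ _ H1; rewrite ?addn0 ?addn1 ?addn2 in H1 H2 P1 P2 *; try lia.
  + have := Mb _ t H2; lia.
  + have := Mb _ t (ltnW H2); have := Mb _ t.+1 H2; lia.
- have [k Ek] : exists k, t = (t' + k)%N by exists (t - t')%N; lia.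
  subst t. case: k H1 H2 H3 H4 h => [|[|[|k]]] H1 H2 H3 H4 h; have P2 := Mt_pos _ _ H2; have P1 := Mt_pos _ _ H1; rewrite ?addn0 ?addn1 ?addn2 in H1 H2 P1 P2 *; try lia.
  + have := Mb _ t' H1; lia.
  + have := Mb _ t' (ltnW H1); have := Mb _ t'.+1 H1; lia.
Qed.

Lemma key n i j : (1 <= n)%N -> (i.+1 < size (D n))%N -> (j.+1 < size (D n))%N ->
  (i <= j + 3)%N -> (j <= i + 3)%N -> Pp n j <= 32 * n%:Z * Pp n i.
Proof.
case: n => [|m] // _ Hi Hj H1 H2.
have [t [Ht [Hti [Pi1 Pi2]]]] := Pb _ _ Hi.
have [t' [Ht' [Htj [Pj1 Pj2]]]] := Pb _ _ Hj.
have M := M4 _ _ _ Ht Ht' ltac:(lia) ltac:(lia).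
have Q1 := Mt_pos _ _ Ht; have Q2 := Mt_pos _ _ Ht'.
have Ppos : 0 < Pp m.+1 i.
  rewrite /Pp; have := D_pos _ _ Hi; have := D_pos _ _ (ltnW Hi); nia.
have S1 : Mt m t' ^+ 2 <= 16 * Mt m t ^+ 2 by rewrite !expr2; nia.
have S2 : (m%:Z + 2) * Pp m.+1 i <= 2 * m.+1%:Z * Pp m.+1 i by nia.
lia.
Qed.

Lemma sub_eq x y : detr x y -> y - x = 1 / ((denq x * denq y)%:~R : rat).
Proof.
move/eqP=> H.
have H' : (numq y)%:~R * (denq x)%:~R - (numq x)%:~R * (denq y)%:~R = 1 :> rat.
  by rewrite -!intrM -intrB H.
have dx : (denq x)%:~R != 0 :> rat by rewrite intr_eq0 denq_neq0.
have dy : (denq y)%:~R != 0 :> rat by rewrite intr_eq0 denq_neq0.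
transitivity (((numq y)%:~R * (denq x)%:~R - (numq x)%:~R * (denq y)%:~R) / ((denq x)%:~R * (denq y)%:~R) : rat); last by rewrite H' intrM.
rewrite -[in LHS](divq_num_den x) -[in LHS](divq_num_den y).
by field; rewrite dx dy.
Qed.

Lemma clen_eq n i : (i.+1 < size (F n))%N -> clen n i = 1 / (Pp n i)%:~R.
Proof.
move=> Hi.
have /(sortedP 0) H := F_sorted n.
rewrite /clen sub_eq; last exact: H.
by rewrite /Pp /D !(nth_map 0) //; exact: ltnW.
Qed.

Lemma fin (R : realFieldType) (a b c : R) : 0 < a -> 0 < b -> 0 < c -> b <= c * a -> a <= c * b ->
  1 / c <= b / a /\ b / a <= c.
Proof.
move=> ha hb hc k1 k2; split.
  by rewrite ler_pdivlMr // mul1r mulrC ler_pdivrMr // mulrC.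
by rewrite ler_pdivrMr.
Qed.

Theorem proposition9p3 :
  exists C : rat, 1 <= C /\
    forall (n i j : nat), (1 <= n)%N ->
      (i.+1 < size (F n))%N -> (j.+1 < size (F n))%N ->
      (i <= j + 3)%N -> (j <= i + 3)%N ->
      1 / (C * n%:R) <= clen n i / clen n j /\
      clen n i / clen n j <= C * n%:R.
Proof.
exists 32; split; first by [].
move=> n i j Hn Hi Hj H1 H2.
have Hi' : (i.+1 < size (D n))%N by rewrite size_map.
have Hj' : (j.+1 < size (D n))%N by rewrite size_map.
have K1 := key _ _ _ Hn Hi' Hj' H1 H2.
have K2 := key _ _ _ Hn Hj' Hi' H2 H1.
have Pi : 0 < Pp n i.
  rewrite /Pp; have := D_pos _ _ Hi'; have := D_pos _ _ (ltnW Hi'); nia.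
have Pj : 0 < Pp n j.
  rewrite /Pp; have := D_pos _ _ Hj'; have := D_pos _ _ (ltnW Hj'); nia.
rewrite (clen_eq _ _ Hi) (clen_eq _ _ Hj).
set a := (Pp n i)%:~R : rat. set b := (Pp n j)%:~R : rat.
have ha : 0 < a by rewrite ltr0z.
have hb : 0 < b by rewrite ltr0z.
have hn : 0 < (n%:R : rat) by rewrite ltr0n.
have k1 : b <= 32 * n%:R * a.
  by have := K1; rewrite -(ler_int rat) -/b intrM -/a intrM.
have k2 : a <= 32 * n%:R * b.
  by have := K2; rewrite -(ler_int rat) -/a intrM -/b intrM.
have -> : 1 / a / (1 / b) = b / a by field; rewrite ?lt0r_neq0.
have h32 : (0:rat) < 32 by []. exact: (fin _ _ _ _ ha hb (mulr_gt0 h32 hn) k1 k2).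
Qed.
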